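(* Let $T,S\in \mathcal{B}_A(\mathcal{H})$. Then \[ \omega_A(T\pm iS)\leq 2\,\omega_{\mathbb{A}}\left[\begin{pmatrix} O&T\\ iS &O \end{pmatrix}\right]. \]
   Context: $\mathcal{H}$ is a complex Hilbert space and $A\in\mathcal{B}(\mathcal{H})$ is a nonzero positive (semidefinite) operator, inducing the semi-inner product $\langle x,y\rangle_A=\langle Ax,y\rangle$ and seminorm $\|x\|_A=\|A^{1/2}x\|$. $\mathcal{B}_A(\mathcal{H})=\{T\in\mathcal{B}(\mathcal{H}):\mathcal{R}(T^*A)\subseteq\mathcal{R}(A)\}$ is the set of operators admitting an $A$-adjoint (an operator $X$ with $\langle Tx,y\rangle_A=\langle x,Xy\rangle_A$ for all $x,y$). The $A$-numerical radius is $\omega_A(T)=\sup\{|\langle Tx,x\rangle_A| : x\in\mathcal{H},\ \|x\|_A=1\}$. $\mathbb{A}=\begin{pmatrix}A&O\\O&A\end{pmatrix}$ is the positive diagonal operator on $\mathcal{H}\oplus\mathcal{H}$, and $\omega_{\mathbb{A}}$ is the corresponding $\mathbb{A}$-numerical radius on $\mathcal{H}\oplus\mathcal{H}$ (with $\langle x,y\rangle_{\mathbb{A}}=\langle x_1,y_1\rangle_A+\langle x_2,y_2\rangle_A$). Here $iS$ denotes the operator $S$ multiplied by the imaginary unit $i$, and $O$ is the zero operator. *)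

(* Defs.v *)
From HB Require Import structures.
From mathcomp Require Import all_boot all_order all_algebra.
From mathcomp Require Import complex.
From mathcomp Require Import classical_sets boolp reals constructive_ereal ereal.
Set Implicit Arguments. Unset Strict Implicit. Unset Printing Implicit Defensive.
Import Order.TTheory GRing.Theory Num.Theory.
Local Open Scope ring_scope.
Local Open Scope classical_set_scope.

Section HilbertDefs.
Variable R : realType.
Local Notation C := R[i].

Definition cabs (z : C) : R := Num.sqrt (complex.Re z ^+ 2 + complex.Im z ^+ 2).

Variable H : lmodType C.

Definition is_inner_product (ip : H -> H -> C) : Prop :=
  [/\ (forall (a : C) (x y z : H), ip (a *: x + y) z = a * ip x z + ip y z),
      (forall x y : H, ip y x = (ip x y)^*),
      (forall x : H, 0 <= ip x x) &
      (forall x : H, ip x x = 0 -> x = 0)].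

Definition ipnorm (V : Type) (sip : V -> V -> C) (x : V) : R :=
  Num.sqrt (complex.Re (sip x x)).

Definition ip_complete (ip : H -> H -> C) : Prop :=
  forall u : nat -> H,
    (forall e : R, 0 < e -> exists N, forall m n, (N <= m)%N -> (N <= n)%N ->
        ipnorm ip (u m - u n) < e) ->
    exists l : H, forall e : R, 0 < e -> exists N, forall n, (N <= n)%N ->
        ipnorm ip (u n - l) < e.

Definition is_hilbert (ip : H -> H -> C) : Prop :=
  is_inner_product ip /\ ip_complete ip.

Definition bounded_op (ip : H -> H -> C) (T : H -> H) : Prop :=
  exists M : R, forall x, ipnorm ip (T x) <= M * ipnorm ip x.

Definition positive_op (ip : H -> H -> C) (A : H -> H) : Prop :=
  forall x, 0 <= ip (A x) x.

Definition is_adjoint (ip : H -> H -> C) (T Ts : H -> H) : Prop :=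
  forall x y, ip (T x) y = ip x (Ts y).

(* T in B_A(H):  R(T^* A) is contained in R(A) *)
Definition in_BA (ip : H -> H -> C) (A T : H -> H) : Prop :=
  exists Ts : H -> H, is_adjoint ip T Ts /\
    forall y, exists z, Ts (A y) = A z.

Definition ipA (ip : H -> H -> C) (A : H -> H) (x y : H) : C := ip (A x) y.

(* semi-inner product on H (+) H induced by the diagonal operator AA = diag(A,A) *)
Definition ipAA (ip : H -> H -> C) (A : H -> H) (x y : H * H) : C :=
  ipA ip A x.1 y.1 + ipA ip A x.2 y.2.

(* the operator matrix [[O, T], [iS, O]] acting on H (+) H *)
Definition opmx (T S : H -> H) (x : H * H) : H * H :=
  (T x.2, 'i%C *: S x.1).

End HilbertDefs.

Definition numrad (R : realType) (V : Type) (sip : V -> V -> R[i]) (T : V -> V)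
  : \bar R :=
  ereal_sup [set (cabs (sip (T x) x))%:E | x in [set x | ipnorm sip x = 1]].

(* Main.v *)
Require Import Defs.
From HB Require Import structures.
From mathcomp Require Import all_boot all_order all_algebra.
From mathcomp Require Import complex.
From mathcomp Require Import classical_sets boolp reals constructive_ereal ereal.
From mathcomp Require Import ring.
Import Order.TTheory GRing.Theory Num.Theory.
Local Open Scope ring_scope.

Section Helpers.
Variable R : realType.
Variable H : lmodType R[i].
Variable ip : H -> H -> R[i].
Hypothesis hip : is_inner_product ip.

Lemma ipDl x y z : ip (x + y) z = ip x z + ip y z.
Proof. case: hip => h _ _ _. by have := h 1 x y z; rewrite scale1r mul1r. Qed.

Lemma ip0l z : ip 0 z = 0.
Proof.
have := ipDl 0 0 z; rewrite addr0 => /eqP.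
by rewrite -subr_eq0 opprD addrA subrr sub0r oppr_eq0 => /eqP.
Qed.

Lemma ipZl a x z : ip (a *: x) z = a * ip x z.
Proof. case: hip => h _ _ _. by have := h a x 0 z; rewrite addr0 ip0l addr0. Qed.

Lemma ipZr a x y : ip x (a *: y) = a^* * ip x y.
Proof.
case: hip => _ h _ _. by rewrite h ipZl rmorphM /= -h.
Qed.

End Helpers.

Lemma cabsE (R : realType) (z : R[i]) : ((cabs z)%:C)%C = `|z|.
Proof. by rewrite normc_def. Qed.

Lemma cabsM (R : realType) (c z : R[i]) : cabs (c * z) = cabs c * cabs z.
Proof. apply: complexI; by rewrite rmorphM /= !cabsE normrM. Qed.

Lemma cabs2 (R : realType) : cabs (2 : R[i]) = 2.
Proof. apply: complexI; by rewrite cabsE rmorph_nat normr_nat. Qed.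

Lemma cabs2i (R : realType) : cabs (2 * - 'i%C : R[i]) = 2.
Proof.
apply: complexI; rewrite cabsE normrM normrN normr_nat rmorph_nat.
have -> : ('i%C : R[i]) = 'i by [].
by rewrite normCi mulr1.
Qed.

Lemma conj_real (R : realType) (r : R) : Num.conj ((r%:C)%C : R[i]) = (r%:C)%C.
Proof. apply: conj_Creal. apply/complex_realP. by exists r. Qed.

Lemma conj_i (R : realType) : Num.conj ('i%C : R[i]) = - 'i%C.
Proof. have -> : ('i%C : R[i]) = 'i by []. exact: conjCi. Qed.

Lemma ii (R : realType) : ('i%C : R[i]) * 'i%C = -1.
Proof. by rewrite -expr2 sqr_i. Qed.

Theorem lemma2p21 (R : realType) (H : lmodType R[i]) (ip : H -> H -> R[i])
  (hH : is_hilbert ip)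
  (A : {linear H -> H}) (hAb : bounded_op ip A) (hApos : positive_op ip A)
  (hA0 : exists x, A x != 0)
  (T S : {linear H -> H}) (hTb : bounded_op ip T) (hSb : bounded_op ip S)
  (hT : in_BA ip A T) (hS : in_BA ip A S) :
  let w := numrad (ipAA ip A) (opmx T S) in
  (numrad (ipA ip A) (fun x => (T x + 'i%C *: S x)%R) <= 2%:E * w)%E /\
  (numrad (ipA ip A) (fun x => (T x - 'i%C *: S x)%R) <= 2%:E * w)%E.
Proof.
move=> w; case: hH => hip _.
have iZl := @ipZl _ _ _ hip. have iZr := @ipZr _ _ _ hip. have iDl := @ipDl _ _ _ hip.
set k : R[i] := (((Num.sqrt (2 : R))^-1)%:C)%C.
have kJ : k^* = k by rewrite conj_real.
have kk : k * k = 2^-1.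
  rewrite /k -rmorphM /= -invfM -expr2 sqr_sqrtr ?ler0n //.
  by rewrite rmorphV ?unitfE ?pnatr_eq0 //= rmorph_nat.
have h2 : (2 : R[i]) * 2^-1 = 1 by rewrite divff // pnatr_eq0.
have Mu : forall a b x, ipAA ip A (opmx T S (a *: x, b *: x)) (a *: x, b *: x)
   = b * a^* * ip (A (T x)) x + 'i%C * a * b^* * ip (A (S x)) x.
  move=> a b x; rewrite /ipAA /ipA /opmx /= !linearZ /= !(iZl, iZr).
  ring.
have Nu : forall a b x, ipAA ip A (a *: x, b *: x) (a *: x, b *: x)
   = (a * a^* + b * b^*) * ip (A x) x.
  move=> a b x; rewrite /ipAA /ipA /= !linearZ /= !(iZl, iZr).
  ring.
have key : forall (f : H -> H) (c : R[i]) (a b : R[i]),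
    a * a^* + b * b^* = 1 ->
    (forall x, ip (A (f x)) x = c * ipAA ip A (opmx T S (a *: x, b *: x)) (a *: x, b *: x)) ->
    cabs c = 2 ->
    (numrad (ipA ip A) f <= 2%:E * w)%E.
  move=> f c a b hab hf hc.
  apply: ge_ereal_sup => _ [x /= hx <-].
  rewrite /ipA hf cabsM hc EFinM.
  apply: lee_wpmul2l; first by rewrite lee_fin ler0n.
  apply: ereal_sup_ubound => /=.
  exists (a *: x, b *: x) => //=.
  by rewrite /ipnorm Nu hab mul1r.
split.
- apply: (key _ 2 k k).
    by rewrite kJ kk -{3}h2; ring.
  + move=> x; rewrite Mu kJ linearD linearZ /= iDl iZl.
    have -> : k * k * ip (A (T x)) x + 'i%C * k * k * ip (A (S x)) x
      = (k * k) * (ip (A (T x)) x + 'i%C * ip (A (S x)) x) by ring.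
    by rewrite kk mulrA h2 mul1r.
  + exact: cabs2.
- apply: (key _ (2 * - 'i%C) k ('i%C * k)).
  + rewrite kJ rmorphM /= kJ conj_i.
    have -> : k * k + 'i%C * k * (- 'i%C * k) = (k * k) * (1 - 'i%C * 'i%C) by ring.
    by rewrite ii opprK kk mulrC h2.
  + move=> x; rewrite Mu kJ rmorphM /= kJ conj_i linearB linearZ /= iDl.
    have -> : ip (- ('i%C *: A (S x))) x = - ('i%C * ip (A (S x)) x).
      by rewrite -scaleNr iZl mulNr.
    have -> : (2 * - 'i%C) * ('i%C * k * k * ip (A (T x)) x + 'i%C * k * (- 'i%C * k) * ip (A (S x)) x)
      = (2 * (k * k)) * (- ('i%C * 'i%C)) * (ip (A (T x)) x - 'i%C * ip (A (S x)) x) by ring.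
    by rewrite kk h2 ii opprK !mul1r.
  + exact: cabs2i.
Qed.
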